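(* For any positive integer $n$, $\chi_{ld}(F_n+B_{n,n})=2n+5$.
   Context: All graphs are finite, simple and undirected. For a graph $G=(V,E)$ of order $N$ without isolated vertices, a bijection $f\colon V\to\{1,2,\dots,N\}$ is a local distance antimagic labeling if $w(u)\neq w(v)$ for every edge $uv$, where $w(u)=\sum_{x\in N(u)}f(x)$ and $N(u)$ is the open neighborhood of $u$. $\chi_{ld}(G)$ is the minimum number of distinct values of $w$ over all local distance antimagic labelings of $G$. The friendship graph $F_n$ consists of $n$ triangles sharing one common vertex. The bistar $B_{n,n}$ has vertices $a,b,x_1,\dots,x_n,y_1,\dots,y_n$ with edges $ab$, $ax_i$ and $by_i$ ($1\le i\le n$). $G+H$ is the join: the disjoint union of $G$ and $H$ plus all edges between $V(G)$ and $V(H)$. *)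

(* Defs.v *)
From mathcomp Require Import all_boot.
Set Implicit Arguments. Unset Strict Implicit. Unset Printing Implicit Defensive.

Definition simple_graph (V : finType) (e : rel V) : Prop :=
  symmetric e /\ irreflexive e.

Definition no_isolated (V : finType) (e : rel V) : Prop :=
  forall u : V, exists v : V, e u v.

Definition weight (V : finType) (e : rel V) (f : V -> nat) (u : V) : nat :=
  \sum_(x : V | e u x) f x.

Definition bij_labeling (V : finType) (f : V -> nat) : Prop :=
  [/\ forall v, 1 <= f v <= #|V|,
      injective f &
      forall k, 1 <= k <= #|V| -> exists v, f v = k].

Definition ld_antimagic (V : finType) (e : rel V) (f : V -> nat) : Prop :=
  bij_labeling f /\ forall u v, e u v -> weight e f u <> weight e f v.

Definition num_weights (V : finType) (e : rel V) (f : V -> nat) : nat :=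
  size (undup [seq weight e f u | u <- enum V]).

Definition chi_ld_is (V : finType) (e : rel V) (k : nat) : Prop :=
  (exists f, ld_antimagic e f /\ num_weights e f = k) /\
  (forall f, ld_antimagic e f -> k <= num_weights e f).

(* Friendship graph F_n: center = None, triangle i has vertices Some (i,false),
   Some (i,true). *)
Definition friend_V (n : nat) : finType := option ('I_n * bool).
Definition friend_e (n : nat) : rel (friend_V n) :=
  fun u v => match u, v with
  | None, Some _ => true
  | Some _, None => true
  | Some (i, b), Some (j, c) => (i == j) && (b != c)
  | None, None => false
  end.

Arguments friend_e n : clear implicits.

(* Bistar B_{n,n}: a = inl false, b = inl true, x_i = inr (i,false),
   y_i = inr (i,true). Edges ab, a x_i, b y_i. *)
Definition bistar_V (n : nat) : finType := (bool + ('I_n * bool))%type.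
Definition bistar_e (n : nat) : rel (bistar_V n) :=
  fun u v => match u, v with
  | inl b, inl c => b != c
  | inl b, inr (_, c) => b == c
  | inr (_, c), inl b => b == c
  | inr _, inr _ => false
  end.

Arguments bistar_e n : clear implicits.

Definition join_e (V W : finType) (e : rel V) (g : rel W) : rel (V + W)%type :=
  fun u v => match u, v with
  | inl x, inl y => e x y
  | inr x, inr y => g x y
  | _, _ => true
  end.

Definition FB_V (n : nat) : finType := (friend_V n + bistar_V n)%type.
Definition FB_e (n : nat) : rel (FB_V n) := join_e (friend_e n) (bistar_e n).
Arguments FB_e n : clear implicits.

(* Main.v *)
Require Import Defs.
From mathcomp Require Import all_boot zify.
Set Implicit Arguments. Unset Strict Implicit. Unset Printing Implicit Defensive.

Lemma big_opt (T : finType) (F : option T -> nat) (P : pred (option T)) :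
  \sum_(x | P x) F x = (if P None then F None else 0) + \sum_(p | P (Some p)) F (Some p).
Proof.
case PN: (P None).
  rewrite (bigD1 None) //=; congr (_ + _).
  rewrite (reindex_omap Some id) /=; last by move=> [p|] //= /andP[].
  by apply: eq_bigl => p; rewrite eqxx andbT /= andbT.
rewrite add0n (reindex_omap Some id) /=; last by move=> [p|] //=; rewrite PN.
by apply: eq_bigl => p; rewrite eqxx andbT.
Qed.

Section W.
Variable n : nat.
Variable f : FB_V n -> nat.
Definition SF := \sum_(x : friend_V n) f (inl x).
Definition SB := \sum_(y : bistar_V n) f (inr y).
Definition XX c := \sum_(i < n) f (inr (inr (i, c))).
Definition PF := \sum_(p : 'I_n * bool) f (inl (Some p)).
Local Notation w := (weight (FB_e n) f).

Lemma w_inl x : w (inl x) = \sum_(y | friend_e n x y) f (inl y) + SB.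
Proof. by rewrite /weight big_sumType. Qed.

Lemma w_inr x : w (inr x) = SF + \sum_(y | bistar_e n x y) f (inr y).
Proof. by rewrite /weight big_sumType. Qed.

Lemma SF_eq : SF = f (inl None) + PF.
Proof. by rewrite /SF big_opt. Qed.

Lemma wC : w (inl None) = PF + SB.
Proof. by rewrite w_inl big_opt /= add0n. Qed.

Lemma wS i b : w (inl (Some (i, b))) = f (inl None) + f (inl (Some (i, ~~ b))) + SB.
Proof.
rewrite w_inl big_opt /= (big_pred1 (i, ~~ b)) // => -[j c] /=.
by rewrite xpair_eqE eq_sym; case: b; case: c; rewrite ?andbT ?andbF.
Qed.

Lemma pairsum (g : 'I_n -> bool -> nat) (c : bool) :
  \sum_(p : 'I_n * bool | c == p.2) g p.1 p.2 = \sum_(i < n) g i c.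
Proof.
transitivity (\sum_(p : 'I_n * bool | xpredT p.1 && (pred1 c) p.2) g p.1 p.2).
  by apply: eq_bigl => -[i d] /=; rewrite eq_sym.
rewrite -(pair_big xpredT (pred1 c)) /=.
by apply: eq_bigr => i _; rewrite (big_pred1 c).
Qed.

Lemma pairsum2 (g : 'I_n -> bool -> nat) :
  \sum_(p : 'I_n * bool) g p.1 p.2 = \sum_(i < n) g i true + \sum_(i < n) g i false.
Proof. by rewrite -pair_bigA -big_split /=; apply: eq_bigr => i _; rewrite big_bool. Qed.

Lemma wA c : w (inr (inl c)) = SF + f (inr (inl (~~ c))) + XX c.
Proof.
rewrite w_inr big_sumType -addnA; congr (_ + (_ + _)).
  by rewrite (big_pred1 (~~ c)) // => d /=; case: c; case: d.
rewrite /XX -(pairsum (fun i d => f (inr (inr (i, d))))).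
by apply: eq_big => -[i d].
Qed.

Lemma wX i c : w (inr (inr (i, c))) = SF + f (inr (inl c)).
Proof.
rewrite w_inr big_sumType (big_pred1 c); last by move=> d /=; rewrite eq_sym.
rewrite big_pred0; [by rewrite /= addn0 | by move=> [j d]].
Qed.

Lemma SB_eq : SB = f (inr (inl true)) + f (inr (inl false)) + XX true + XX false.
Proof.
rewrite /SB big_sumType big_bool -addnA; congr (_ + _).
rewrite /XX -(pairsum2 (fun i d => f (inr (inr (i, d))))).
by apply: eq_bigr => -[i d].
Qed.

Lemma PF_eq : PF = \sum_(i < n) f (inl (Some (i, true))) + \sum_(i < n) f (inl (Some (i, false))).
Proof.
rewrite /PF -(pairsum2 (fun i d => f (inl (Some (i, d))))).
by apply: eq_bigr => -[i d].
Qed.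

End W.

Lemma XXpos n (f : FB_V n -> nat) c (Hn : 0 < n) :
  (forall v, 1 <= f v) -> 0 < XX f c.
Proof.
move=> H; rewrite /XX (bigD1 (Ordinal Hn)) //=.
exact: leq_trans (H (inr (inr (Ordinal Hn, c)))) (leq_addr _ _).
Qed.

Lemma key n (f : FB_V n -> nat) (Hn : 0 < n) : ld_antimagic (FB_e n) f ->
  forall u v, weight (FB_e n) f u = weight (FB_e n) f v ->
  u = v \/ exists i j c, u = inr (inr (i, c)) /\ v = inr (inr (j, c)).
Proof.
move=> [[Hr0 Hinj _] Ham] u v Huv.
have Hr : forall x, 1 <= f x by move=> x; case/andP: (Hr0 x).
have adj : FB_e n u v -> False by move=> E; exact: Ham _ _ E Huv.
move: adj Huv.
case: u => [[[i b]|] | [c | [i c]]]; case: v => [[[j d]|] | [e | [j e]]];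
  rewrite /FB_e /join_e /friend_e /bistar_e /= => adj Huv;
  try (by exfalso; apply: adj).
- rewrite !wS in Huv.
  have E : f (inl (Some (i, ~~ b))) = f (inl (Some (j, ~~ d))) by lia.
  case: (Hinj _ _ E) => -> /negb_inj ->; by left.
- by left.
- by case: c e adj Huv => [] [] adj Huv; try (by left); exfalso; apply: adj.
- case: c e adj Huv => [] [] adj Huv; try (by exfalso; apply: adj);
  rewrite wA wX in Huv; have := XXpos (f := f) true Hn Hr; have := XXpos (f := f) false Hn Hr; simpl in *; lia.
- case: c e adj Huv => [] [] adj Huv; try (by exfalso; apply: adj);
  rewrite wA wX in Huv; have := XXpos (f := f) true Hn Hr; have := XXpos (f := f) false Hn Hr; simpl in *; lia.
- rewrite !wX in Huv.
  have E : f (inr (inl c)) = f (inr (inl e)) by lia.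
  case: (Hinj _ _ E) => <-; right; by exists i, j, c.
Qed.

Lemma all_num n (f : FB_V n -> nat) (Hn : 0 < n) : ld_antimagic (FB_e n) f ->
  num_weights (FB_e n) f = 2 * n + 5.
Proof.
move=> Hf.
set w := weight (FB_e n) f.
set i0 : 'I_n := Ordinal Hn.
pose r : seq (FB_V n) := inl None :: [seq inl (Some p) | p <- enum {: 'I_n * bool}] ++
  [:: inr (inl false); inr (inl true); inr (inr (i0, false)); inr (inr (i0, true))].
have Hsz : size (map w r) = 2 * n + 5.
  rewrite size_map /= size_cat size_map -cardE card_prod card_ord card_bool /=; lia.
have Hr : uniq r.
  rewrite /= cat_uniq map_inj_uniq ?enum_uniq; last by move=> x y [].
  rewrite /= mem_cat negb_or; apply/and3P; split => //.
    apply/andP; split; first by apply/mapP => -[p _].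
    by rewrite !in_cons in_nil.
  by rewrite !negb_or; repeat (apply/andP; split); try (apply/mapP => -[p _]).
have Hinr : {in r &, injective w}.
  move=> u v Hu Hv /(key Hn Hf) [//|[i [j [c [Eu Ev]]]]].
  have Hk : forall k d, inr (inr (k, d)) \in r -> k = i0.
    move=> k d; rewrite /r in_cons mem_cat => /orP[//|/orP[/mapP[p _ //]|]].
    by rewrite !in_cons in_nil orbF => /orP[//|/orP[//|/orP[]]] /eqP [-> _].
  by move: Hu Hv; rewrite Eu Ev => /Hk -> /Hk ->.
have Hu : uniq (map w r) by rewrite map_inj_in_uniq.
have Hcov : forall u, w u \in map w r.
  move=> [[p|]|[c|[i c]]].
  - apply: map_f; rewrite inE mem_cat; apply/orP; right; apply/orP; left.
    by apply: map_f; rewrite mem_enum.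
  - by apply: map_f; rewrite inE eqxx.
  - by apply: map_f; case: c; rewrite !inE ?mem_cat ?eqxx ?orbT.
  - have -> : w (inr (inr (i, c))) = w (inr (inr (i0, c))) by rewrite /w !wX.
    by apply: map_f; case: c; rewrite !inE ?mem_cat ?eqxx ?orbT.
rewrite /num_weights -Hsz; apply/eqP; rewrite eqn_leq; apply/andP; split.
  apply: uniq_leq_size; first exact: undup_uniq.
  by move=> x; rewrite mem_undup => /mapP [u _ ->].
apply: uniq_leq_size => // x /mapP [u _ ->].
by rewrite mem_undup; apply: map_f; rewrite mem_enum.
Qed.

Lemma surj_gen (V : finType) (f : V -> nat) :
  (forall v, 1 <= f v <= #|V|) -> injective f ->
  forall k, 1 <= k <= #|V| -> exists v, f v = k.
Proof.
move=> H Hi k Hk.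
have U : uniq (map f (enum V)) by rewrite map_inj_uniq ?enum_uniq.
have S : {subset map f (enum V) <= iota 1 #|V|}.
  by move=> x /mapP [v _ ->]; rewrite mem_iota; have := H v; lia.
have [_ E] := uniq_min_size U S (eq_leq (etrans (size_iota _ _) (esym (etrans (size_map _ _) (esym (cardE _)))))).
have : k \in iota 1 #|V| by rewrite mem_iota; lia.
by rewrite -E => /mapP [v _ ->]; exists v.
Qed.

Lemma card_FB n : #|FB_V n| = 4 * n + 3.
Proof.
rewrite /FB_V card_sum /friend_V /bistar_V card_option card_sum !card_prod card_ord card_bool; lia.
Qed.

Definition fl n (u : FB_V n) : nat :=
  match u with
  | inl None => 1
  | inl (Some (i, b)) => 2 + 2 * i + b
  | inr (inl c) => 2 * n + 3 - c
  | inr (inr (i, c)) => 2 * n + 4 + 2 * i + c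
  end.

Lemma fl_range n (u : FB_V n) : 1 <= fl u <= #|FB_V n|.
Proof.
rewrite card_FB; case: u => [[[i b]|]|[c|[i c]]] /=; try have := ltn_ord i; try case: b; try case: c; simpl; lia.
Qed.

Lemma fl_inj n : injective (@fl n).
Proof.
move=> [[[i b]|]|[c|[i c]]] [[[j d]|]|[e|[j e]]] /=;
  try have := ltn_ord i; try have := ltn_ord j;
  try case: b; try case: d; try case: c; try case: e; simpl; move=> *; try lia;
  try (have E : i = j by apply: ord_inj; lia); subst; done.
Qed.

Lemma fl_bij n : bij_labeling (@fl n).
Proof.
split; [exact: fl_range | exact: fl_inj | ].
exact: surj_gen (@fl_range n) (@fl_inj n).
Qed.

Lemma sum_lin m a b : \sum_(i < m) (a + b * i) = a * m + b * \sum_(i < m) i.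
Proof.
elim: m => [|m IH]; first by rewrite !big_ord0 !muln0.
rewrite !big_ord_recr /= IH.
set T := \sum_(i < m) i. rewrite mulnS mulnDr. clear IH. clearbody T. lia.
Qed.

Lemma tri m : 2 * \sum_(i < m) i + m = m * m.
Proof.
elim: m => [|m IH]; first by rewrite !big_ord0.
rewrite !big_ord_recr /=. move: IH. set T := \sum_(i < m) i. clearbody T. move=> IH. nia.
Qed.

Lemma PF_fl n : PF (@fl n) = 5 * n + 4 * \sum_(i < n) i.
Proof.
rewrite PF_eq.
have -> : \sum_(i < n) fl (inl (Some (i, true)) : FB_V n) = \sum_(i < n) (3 + 2 * i).
  by apply: eq_bigr => i _ /=; lia.
have -> : \sum_(i < n) fl (inl (Some (i, false)) : FB_V n) = \sum_(i < n) (2 + 2 * i).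
  by apply: eq_bigr => i _ /=; lia.
rewrite !sum_lin; lia.
Qed.

Lemma XX_fl n c : XX (@fl n) c = 2 * (n * n) + (4 + c) * n + 2 * \sum_(i < n) i.
Proof.
rewrite /XX /=.
rewrite (eq_bigr (fun i : 'I_n => (2 * n + 4 + c) + 2 * i)); last by move=> i _ /=; lia.
rewrite sum_lin; congr (_ + _); rewrite !mulnDl -?mulnA; lia.
Qed.

Lemma fl_am n : 0 < n -> forall u v, FB_e n u v -> weight (FB_e n) (@fl n) u <> weight (FB_e n) (@fl n) v.
Proof.
move=> Hn u v.
have Ht := tri n.
case: u => [[[i b]|] | [c | [i c]]]; case: v => [[[j d]|] | [e | [j e]]];
  rewrite /FB_e /join_e /friend_e /bistar_e /= => adj;
  rewrite ?wC ?wS ?wA ?wX ?SF_eq ?SB_eq ?PF_fl ?XX_fl /=;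
  try have := ltn_ord i; try have := ltn_ord j;
  try case: b adj; try case: d; try case: c; try case: e; simpl; move=> *.
all: move: Ht; set T := \sum_(i < n) i; set N2 := n * n; clearbody T N2 => Ht; lia.
Qed.

Theorem mainTheorem4 (n : nat) : 0 < n -> chi_ld_is (FB_e n) (2 * n + 5).
Proof.
move=> Hn; split.
  exists (@fl n); split; first by split; [exact: fl_bij | exact: fl_am].
  have Ham : ld_antimagic (FB_e n) (@fl n) by split; [exact: fl_bij | exact: fl_am].
  exact: all_num Hn Ham.
by move=> f Hf; rewrite (all_num Hn Hf).
Qed.
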